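(* Let $M$ be a commutative and cocommutative Hopf algebra over $\mathbb{C}$, let $A$ be a commutative $\mathbb{C}$-algebra, and let $r_1,r_2$ be $A$-valued bicharacters on $M$. If $r=r_1\circ r_2$, then \[ \mathrm{EQ}_{r}=\mathrm{EQ}_{r_1}\circ\mathrm{EQ}_{r_2}. \]
   Context: For a Hopf algebra $M$ with coproduct $\Delta$ and counit $\eta$, Sweedler notation is used: $\Delta(a)=\sum a'\otimes a''$, $\Delta^2(a)=\sum a'\otimes a''\otimes a'''$. An $A$-valued bicharacter on $M$ is a linear map $r:M\otimes M\to A$ such that for all $a,b,c\in M$: $r(1\otimes a)=\eta(a)=r(a\otimes 1)$, $r(ab\otimes c)=\sum r(a\otimes c')r(b\otimes c'')$, and $r(a\otimes bc)=\sum r(a'\otimes b)r(a''\otimes c)$. The convolution of bicharacters is $(r_1\circ r_2)(a\otimes b)=\sum r_1(a'\otimes b')r_2(a''\otimes b'')$. Write $M_A=M\otimes_{\mathbb{C}}A$. The map $\mathrm{EQ}_r:M\to M_A$ is $\mathrm{EQ}_r(m)=\sum r(m'\otimes m'')m'''$, extended $A$-linearly to $M_A\to M_A$; the composition $\mathrm{EQ}_{r_1}\circ\mathrm{EQ}_{r_2}$ uses this $A$-linear extension of $\mathrm{EQ}_{r_1}$. *)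

(* Defs.v *)
(* The complex numbers are R[i] (real_closed's `complex`)
   over an arbitrary realType R (a model of the reals). *)
From HB Require Import structures.
From mathcomp Require Import all_boot all_order all_algebra.
From mathcomp Require Import reals complex.
Set Implicit Arguments. Unset Strict Implicit. Unset Printing Implicit Defensive.
Import Order.TTheory GRing.Theory Num.Theory.
Local Open Scope ring_scope.

Section Hopf.
Variable C : fieldType.

(* Elements of a tensor product U (x) W (over C) are represented as finite
   sums of simple tensors, i.e. sequences of pairs.  Two such sums are equal
   in U (x) W iff every C-bilinear map out of U * W agrees on them
   (universal property of the tensor product). *)
Definition bilinear_map (U W V : lmodType C) (f : U -> W -> V) : Prop :=
  (forall (k : C) x y b, f (k *: x + y) b = k *: f x b + f y b) /\
  (forall (k : C) a x y, f a (k *: x + y) = k *: f a x + f a y).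

Definition trilinear_map (U W X V : lmodType C) (f : U -> W -> X -> V) : Prop :=
  (forall (k : C) x y b c, f (k *: x + y) b c = k *: f x b c + f y b c) /\
  (forall (k : C) a x y c, f a (k *: x + y) c = k *: f a x c + f a y c) /\
  (forall (k : C) a b x y, f a b (k *: x + y) = k *: f a b x + f a b y).

Definition tens_eval (U W V : lmodType C) (f : U -> W -> V) (t : seq (U * W)) : V :=
  \sum_(p <- t) f p.1 p.2.

Definition tens_eq (U W : lmodType C) (t1 t2 : seq (U * W)) : Prop :=
  forall (V : lmodType C) (f : U -> W -> V), bilinear_map f ->
    tens_eval f t1 = tens_eval f t2.

(* A commutative (M is a comAlgType) and cocommutative Hopf algebra over C.
   The coproduct Delta a = sum a' (x) a'' is given by a sequence of pairs. *)
Record cchopf (M : comAlgType C) := CCHopf {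
  Delta : M -> seq (M * M);
  counit : M -> C;
  antipode : M -> M;
  Delta_linear : forall (k : C) a b (V : lmodType C) (f : M -> M -> V),
    bilinear_map f ->
    tens_eval f (Delta (k *: a + b)) = k *: tens_eval f (Delta a) + tens_eval f (Delta b);
  Delta1 : tens_eq (Delta 1) [:: (1, 1)];
  DeltaM : forall a b, tens_eq (Delta (a * b))
     [seq (p.1 * q.1, p.2 * q.2) | p <- Delta a, q <- Delta b];
  Delta_coassoc : forall a (V : lmodType C) (g : M -> M -> M -> V),
    trilinear_map g ->
    \sum_(p <- Delta a) \sum_(q <- Delta p.1) g q.1 q.2 p.2 =
    \sum_(p <- Delta a) \sum_(q <- Delta p.2) g p.1 q.1 q.2;
  counit_linear : forall (k : C) a b, counit (k *: a + b) = k * counit a + counit b;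
  counit1 : counit 1 = 1;
  counitM : forall a b, counit (a * b) = counit a * counit b;
  counit_left : forall a, \sum_(p <- Delta a) counit p.1 *: p.2 = a;
  counit_right : forall a, \sum_(p <- Delta a) counit p.2 *: p.1 = a;
  antipode_linear : forall (k : C) a b, antipode (k *: a + b) = k *: antipode a + antipode b;
  antipode_left : forall a, \sum_(p <- Delta a) antipode p.1 * p.2 = counit a *: 1;
  antipode_right : forall a, \sum_(p <- Delta a) p.1 * antipode p.2 = counit a *: 1;
  Delta_cocomm : forall a, tens_eq (Delta a) [seq (p.2, p.1) | p <- Delta a]
}.

Variables (M : comAlgType C) (H : cchopf M) (A : comAlgType C).

(* An A-valued bicharacter: a C-linear map M (x) M -> A, i.e. a bilinear map. *)
Definition bicharacter (r : M -> M -> A) : Prop :=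
  bilinear_map r /\
  (forall a, r 1 a = (counit H a)%:A) /\
  (forall a, r a 1 = (counit H a)%:A) /\
  (forall a b c, r (a * b) c = \sum_(q <- Delta H c) r a q.1 * r b q.2) /\
  (forall a b c, r a (b * c) = \sum_(p <- Delta H a) r p.1 b * r p.2 c).

Definition conv (r1 r2 : M -> M -> A) : M -> M -> A := fun a b =>
  \sum_(p <- Delta H a) \sum_(q <- Delta H b) r1 p.1 q.1 * r2 p.2 q.2.

(* EQ_r : M -> M_A = M (x)_C A, EQ_r(m) = sum r(m' (x) m'') m''',
   with Delta^2 = (Delta (x) id) o Delta. *)
Definition EQ (r : M -> M -> A) (m : M) : seq (M * A) :=
  [seq (p.2, r q.1 q.2) | p <- Delta H m, q <- Delta H p.1].

(* A-linear extension of EQ_r to M_A: EQ_r(m (x) a) = EQ_r(m) * a. *)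
Definition EQA (r : M -> M -> A) (t : seq (M * A)) : seq (M * A) :=
  [seq (y.1, y.2 * x.2) | x <- t, y <- EQ r x.1].

End Hopf.

(* Main.v *)
Require Import Defs.
From HB Require Import structures.
From mathcomp Require Import all_boot all_order all_algebra.
From mathcomp Require Import reals complex.
Import GRing.Theory.
Local Open Scope ring_scope.
Local Open Scope complex_scope.
Set Implicit Arguments. Unset Strict Implicit. Unset Printing Implicit Defensive.

Section Aux.
Variables (C : fieldType) (M : comAlgType C) (H : cchopf M).

Definition lin1 (U V : lmodType C) (f : U -> V) :=
  forall (k : C) x y, f (k *: x + y) = k *: f x + f y.

Lemma lin1_0 (U V : lmodType C) (f : U -> V) : lin1 f -> f 0 = 0.
Proof.
move=> hf; have := hf 1 0 0; rewrite !scale1r addr0 => h.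
have := congr1 (fun z => z - f 0) h; rewrite subrr addrK => e; by rewrite -e.
Qed.

Lemma lin1_sum (U V : lmodType C) (f : U -> V) I (s : seq I) F :
  lin1 f -> f (\sum_(i <- s) F i) = \sum_(i <- s) f (F i).
Proof.
move=> hf; elim: s => [|x s IH]; first by rewrite !big_nil lin1_0.
have add : forall a b, f (a + b) = f a + f b.
  by move=> a b; rewrite -[a]scale1r hf !scale1r.
by rewrite !big_cons add IH.
Qed.

Lemma lin_sum (U V : lmodType C) I (s : seq I) (F : I -> U -> V) :
  (forall i, lin1 (F i)) -> lin1 (fun x => \sum_(i <- s) F i x).
Proof.
move=> h k x y; rewrite scaler_sumr -big_split; apply: eq_bigr => i _; exact: h.
Qed.

Definition S (V : lmodType C) a (g : M -> M -> V) := \sum_(p <- Delta H a) g p.1 p.2.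

Lemma bilinP (V : lmodType C) (g : M -> M -> V) :
  (forall b, lin1 (fun a => g a b)) -> (forall a, lin1 (g a)) -> bilinear_map g.
Proof. by move=> h1 h2; split => *; [apply: h1|apply: h2]. Qed.

Lemma trilinP (V : lmodType C) (g : M -> M -> M -> V) :
  (forall b c, lin1 (fun a => g a b c)) -> (forall a c, lin1 (fun b => g a b c)) ->
  (forall a b, lin1 (g a b)) -> trilinear_map g.
Proof. by move=> h1 h2 h3; split; [|split] => *; [apply: h1|apply: h2|apply: h3]. Qed.

Lemma lin_S_in (V : lmodType C) (g : M -> M -> V) :
  (forall b, lin1 (fun a => g a b)) -> (forall a, lin1 (g a)) -> lin1 (fun a => S a g).
Proof. move=> h1 h2 k a b; exact: (Delta_linear H k a b (bilinP h1 h2)). Qed.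

Lemma lin_S_par (X V : lmodType C) a (g : X -> M -> M -> V) :
  (forall p q, lin1 (fun x => g x p q)) -> lin1 (fun x => S a (g x)).
Proof. move=> h; rewrite /S; apply: (@lin_sum _ _ _ _ (fun p x => g x p.1 p.2)) => p; exact: h. Qed.

Lemma Co (V : lmodType C) a (g : M -> M -> M -> V) :
  (forall b c, lin1 (fun a => g a b c)) -> (forall a c, lin1 (fun b => g a b c)) ->
  (forall a b, lin1 (g a b)) ->
  S a (fun p1 p2 => S p1 (fun q1 q2 => g q1 q2 p2)) =
  S a (fun p1 p2 => S p2 (fun q1 q2 => g p1 q1 q2)).
Proof. move=> h1 h2 h3; exact: (Delta_coassoc H a (trilinP h1 h2 h3)). Qed.

Lemma Cc (V : lmodType C) a (g : M -> M -> V) :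
  (forall b, lin1 (fun a => g a b)) -> (forall a, lin1 (g a)) ->
  S a g = S a (fun x y => g y x).
Proof.
move=> h1 h2; have := Delta_cocomm H a (bilinP h1 h2).
by rewrite /tens_eval big_map.
Qed.

Definition R3 (V : lmodType C) a (g : M -> M -> M -> V) :=
  S a (fun p1 p2 => S p2 (fun q1 q2 => g p1 q1 q2)).

Lemma SW (V : lmodType C) a (g : M -> M -> M -> V) :
  (forall b c, lin1 (fun a => g a b c)) -> (forall a c, lin1 (fun b => g a b c)) ->
  (forall a b, lin1 (g a b)) ->
  R3 a g = R3 a (fun x y z => g y x z).
Proof.
move=> h1 h2 h3; rewrite /R3 -Co //.
transitivity (S a (fun p1 p2 => S p1 (fun q1 q2 => g q2 q1 p2))).
  rewrite /S; apply: eq_bigr => p _; apply: (Cc _ (g := fun x y => g x y p.2)).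
    by move=> b; apply: h1.
  by move=> b; apply: h2.
exact: (Co _ (g := fun x y z => g y x z)).
Qed.

Definition lin4 (V : lmodType C) (K : M -> M -> M -> M -> V) :=
  [/\ (forall b c d, lin1 (fun a => K a b c d)), (forall a c d, lin1 (fun b => K a b c d)),
      (forall a b d, lin1 (fun c => K a b c d)) & (forall a b c, lin1 (K a b c))].

Definition R4 (V : lmodType C) a (K : M -> M -> M -> M -> V) :=
  S a (fun p1 p2 => R3 p2 (K p1)).

Definition T (V : lmodType C) a (K : M -> M -> M -> M -> V) :=
  S a (fun q1 q2 => S q1 (fun u1 u2 => S q2 (fun v1 v2 => K u1 u2 v1 v2))).

Lemma TR4 (V : lmodType C) a K : lin4 K -> T a K = R4 (V:=V) a K.
Proof.
case=> h1 h2 h3 h4.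
apply: (Co _ (g := fun x y z => S z (K x y))).
- by move=> b c; apply: lin_S_par => p q; apply: h1.
- by move=> b c; apply: lin_S_par => p q; apply: h2.
- by move=> x y; apply: lin_S_in => *; [apply: h3|apply: h4].
Qed.

Lemma R4_23 (V : lmodType C) a K : lin4 K -> R4 (V:=V) a K = R4 a (fun x y z w => K x z y w).
Proof.
case=> h1 h2 h3 h4; rewrite /R4 /S; apply: eq_bigr => p _.
apply: SW => *; [apply: h2|apply: h3|apply: h4].
Qed.

Lemma R4_12 (V : lmodType C) a K : lin4 K -> R4 (V:=V) a K = R4 a (fun x y z w => K y x z w).
Proof.
case=> h1 h2 h3 h4.
apply: (SW _ (g := fun x y z => S z (K x y))).
- by move=> b c; apply: lin_S_par => p q; apply: h1.
- by move=> b c; apply: lin_S_par => p q; apply: h2.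
- by move=> x y; apply: lin_S_in => *; [apply: h3|apply: h4].
Qed.

Lemma R4_34 (V : lmodType C) a K : lin4 K -> R4 (V:=V) a K = R4 a (fun x y z w => K x y w z).
Proof.
case=> h1 h2 h3 h4; rewrite /R4 /R3 /S; apply: eq_bigr => p _.
apply: eq_bigr => q _.
apply: (Cc _ (g := fun x y => K p.1 q.1 x y)) => *; [apply: h3|apply: h4].
Qed.

Lemma Tperm (V : lmodType C) a K : lin4 K ->
  T (V:=V) a K = T a (fun x y z w => K z x w y).
Proof.
move=> hK; have [h1 h2 h3 h4] := hK.
rewrite TR4 // TR4; last by split=> *; [apply: h2|apply: h4|apply: h1|apply: h3].
rewrite [RHS]R4_23; last by split=> *; [apply: h2|apply: h4|apply: h1|apply: h3].
rewrite [RHS]R4_12; last by split=> *; [apply: h2|apply: h1|apply: h4|apply: h3].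
rewrite [RHS]R4_34; last by split=> *; [apply: h1|apply: h2|apply: h4|apply: h3].
by [].
Qed.

End Aux.

Theorem lemma2p7 (R : realType) (M : comAlgType R[i]) (H : cchopf M)
  (A : comAlgType R[i]) (r1 r2 r : M -> M -> A) :
  bicharacter H r1 -> bicharacter H r2 ->
  (forall a b, r a b = conv H r1 r2 a b) ->
  forall m : M, tens_eq (EQ H r m) (EQA H r1 (EQ H r2 m)).
Proof.
move=> [[a1 b1] _] [[a2 b2] _] hr m V f [hf1 hf2].
pose F := fun x1 x2 x3 x4 x5 => f x5 (r1 x1 x3 * r2 x2 x4).
have lF : forall z, lin4 (fun a b c d => F a b c d z).
  move=> z; split => * k x y; rewrite /F.
  - by rewrite a1 mulrDl -scalerAl hf2.
  - by rewrite a2 mulrDr -scalerAr hf2.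
  - by rewrite b1 mulrDl -scalerAl hf2.
  - by rewrite b2 mulrDr -scalerAr hf2.
have lF5 : forall a b c d, lin1 (F a b c d) by move=> * k x y; rewrite /F hf1.
have lf2 : forall a, lin1 (f a) by move=> a k x y; rewrite hf2.
have -> : tens_eval f (EQ H r m) = S H m (fun p1 p2 => T H p1 (fun a b c d => F a b c d p2)).
  rewrite /tens_eval /EQ big_allpairs_dep /S; apply: eq_bigr => p _.
  rewrite /T /S; apply: eq_bigr => q _ /=.
  rewrite hr /conv lin1_sum //; apply: eq_bigr => u _.
  by rewrite lin1_sum.
have -> : tens_eval f (EQA H r1 (EQ H r2 m)) =
    S H m (fun p1 p2 => T H p1 (fun a b c d => F c a d b p2)).
  rewrite /tens_eval /EQA big_allpairs_dep /EQ big_allpairs_dep.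
  transitivity (S H m (fun p1 p2 => S H p2 (fun s1 s2 =>
      S H p1 (fun q1 q2 => S H s1 (fun t1 t2 => F t1 q1 t2 q2 s2))))).
    rewrite /S; apply: eq_bigr => p _; rewrite exchange_big /=.
    apply: eq_bigr => q _ /=; rewrite big_allpairs_dep /=.
    by apply: eq_bigr => s _; apply: eq_bigr.
  rewrite /T; symmetry; apply: (Co H m (g := fun x y z => S H x (fun q1 q2 => S H y (fun t1 t2 => F t1 q1 t2 q2 z)))).
  - move=> b c; apply: lin_S_in => *.
      by apply: lin_S_par => *; case: (lF c) => h1 h2 h3 h4; apply: h2.
    by apply: lin_S_par => *; case: (lF c) => h1 h2 h3 h4; apply: h4.
  - move=> a c; apply: lin_S_par => *; apply: lin_S_in => *.
      by case: (lF c) => h1 h2 h3 h4; apply: h1.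
    by case: (lF c) => h1 h2 h3 h4; apply: h3.
  - move=> a b; apply: lin_S_par => *; apply: lin_S_par => *; apply: lF5.
rewrite /S; apply: eq_bigr => p _; exact: Tperm.
Qed.
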